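(* Let $p,q$ be positive integers with $p/q\ge 2$. If $I$ is an independent set of the Kneser graph $K_{p/q}$, then $|N(I)|\ge \frac{p-q}{q}\,|I|$, where $N(I)$ is the set of vertices adjacent to at least one vertex of $I$.
   Context: For integers $1\le q\le p$, the Kneser graph $K_{p/q}$ has as vertices all $q$-element subsets of $[p]=\{1,\dots,p\}$, two being adjacent iff they are disjoint. *)

(* Defs.v *)
From HB Require Import structures.
From mathcomp Require Import all_boot all_order all_algebra.
Set Implicit Arguments. Unset Strict Implicit. Unset Printing Implicit Defensive.

(* Vertices of the Kneser graph K_{p/q}: q-element subsets of [p], modelled as
   subsets of 'I_p (the elements 0..p-1 stand for 1..p). *)
Definition kneser_vertex (p q : nat) (A : {set 'I_p}) : bool := #|A| == q.

Definition kneser_adj (p : nat) (A B : {set 'I_p}) : bool := [disjoint A & B].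

Definition kneser_independent (p q : nat) (I : {set {set 'I_p}}) : bool :=
  [forall A in I, kneser_vertex q A] &&
  [forall A in I, forall B in I, ~~ kneser_adj A B].

Definition kneser_nbhd (p q : nat) (I : {set {set 'I_p}}) : {set {set 'I_p}} :=
  [set B | kneser_vertex q B & [exists A in I, kneser_adj A B]].

(* Main.v *)
Require Import Defs.
From HB Require Import structures.
From mathcomp Require Import all_boot all_order all_algebra all_fingroup.
From mathcomp Require Import zify.
Import Order.TTheory GRing.Theory Num.Theory.

Lemma perm_trans_card (T : finType) (X Y : {set T}) :
  #|X| = #|Y| -> exists s : {perm T}, s @: X = Y.
Proof.
move: {2}#|X :\: Y| (leqnn #|X :\: Y|) => k.
elim: k X => [|k IH] X hk hXY.
  have sub : X \subset Y.
    by rewrite -setD_eq0 -cards_eq0 -leqn0.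
  have -> : X = Y by apply/eqP; rewrite eqEcard sub hXY leqnn.
  exists 1%g.
  by rewrite -[RHS]imset_id; apply: eq_imset => x; rewrite perm1.
case: (set_0Vmem (X :\: Y)) => [e|[x hx]].
  by apply: IH => //; rewrite e cards0.
have hYX : #|Y :\: X| = #|X :\: Y|.
  by rewrite !cardsD hXY setIC.
have : 0 < #|Y :\: X| by rewrite hYX; apply/card_gt0P; exists x.
case/card_gt0P => y hy.
move: hx hy; rewrite !inE => /andP [xY xX] /andP [yX yY].
pose X' := tperm x y @: X.
have cX' : #|X'| = #|Y| by rewrite card_imset ?hXY //; apply: perm_inj.
have sub : X' :\: Y \subset (X :\: Y) :\ x.
  apply/subsetP => z; rewrite !inE => /andP [zY /imsetP [w wX zw]]; subst z.
  move: zY; case: tpermP => [wx|wy|wx wy].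
  - by rewrite yY.
  - by move: wX; rewrite wy (negbTE yX).
  - by move=> wY; rewrite wY wX !andbT; apply/eqP.
have [s hs] : exists s : {perm T}, s @: X' = Y.
  apply: IH => //.
  have h1 := subset_leq_card sub; have h2 := cardsD1 x (X :\: Y).
  rewrite !inE xY xX /= in h2; lia.
exists (tperm x y * s)%g; rewrite -hs /X' -imset_comp.
by apply: eq_imset => z; rewrite permM.
Qed.

Lemma fiber_const (T : finType) (A0 X B : {set T}) :
  #|X| = #|A0| -> #|B| = #|A0| ->
  #|[set s : {perm T} | s @: X == B]| = #|[set s : {perm T} | s @: A0 == A0]|.
Proof.
move=> hX hB.
have [t ht] := @perm_trans_card _ _ _ (esym hX).
have [r hr] := @perm_trans_card _ _ _ (esym hB).
pose f (s : {perm T}) := (t^-1 * s * r)%g.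
have finj : injective f.
  by move=> s1 s2; rewrite /f => /mulIg /mulgI.
rewrite -(card_preimset _ finj); apply: eq_card => s; rewrite !inE.
have -> : f s @: X = r @: (s @: A0).
  rewrite -ht -!imset_comp; apply: eq_imset => x /=.
  by rewrite /f !permM permK.
apply/eqP/eqP => [h|->]; last by rewrite hr.
by apply: (imset_inj (@perm_inj _ r)); rewrite h hr.
Qed.

Definition A0 n q : {set 'I_n.+1} := [set j : 'I_n.+1 | (j < q)%N].
Definition arc n q (i : 'I_n.+1) : {set 'I_n.+1} := [set (i + a)%R | a in A0 n q].

Lemma card_A0 n q : (q <= n.+1)%N -> #|A0 n q| = q.
Proof.
move=> hq.
have -> : A0 n q = [set widen_ord hq k | k : 'I_q].
  apply/setP => j; rewrite inE; apply/idP/imsetP => [hj|[k _ ->]] //=.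
  by exists (Ordinal hj) => //; apply: val_inj.
by rewrite card_imset ?card_ord //; by move=> k1 k2 /(congr1 val) /= e; apply: val_inj.
Qed.

Lemma card_arc n q i : (q <= n.+1)%N -> #|arc n q i| = q.
Proof. by move=> hq; rewrite card_imset ?card_A0 //; apply: addrI. Qed.

Lemma val_addZp n (x y : 'I_n.+1) : val (x + y)%R = ((val x + val y) %% n.+1)%N.
Proof. by []. Qed.

Lemma arc_disj n q (i : 'I_n.+1) d : (q <= d)%N -> (d + q <= n.+1)%N ->
  [disjoint arc n q i & arc n q (i + (inZp d : 'I_n.+1))%R].
Proof.
move=> h1 h2; rewrite disjoint_subset; apply/subsetP => x /imsetP [a ha ->].
rewrite inE /=; apply/negP => /imsetP [b hb e].
move: e; rewrite -addrA => /addrI e.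
move: ha hb; rewrite !inE => ha hb.
have := congr1 val e; rewrite val_addZp /= (modn_small (m:=d)); last by lia.
by rewrite modn_small; lia.
Qed.

Lemma inZpS n j : (inZp j.+1 : 'I_n.+1) = (inZp j + inZp 1)%R.
Proof. by apply: val_inj => /=; rewrite modnDm addn1. Qed.

Fixpoint Dset n (K : {set 'I_n.+1}) (c : 'I_n.+1) t : {set 'I_n.+1} :=
  if t is t'.+1 then Dset n K c t' :|: [set (x + inZp 1)%R | x in Dset n K c t']
  else [set (k + c)%R | k in K].
Arguments Dset {n}.

Lemma Dset_mem n K c t (x : 'I_n.+1) : x \in Dset K c t ->
  exists k, k \in K /\ exists j, (j <= t)%N /\ x = (k + c + (inZp j : 'I_n.+1))%R.
Proof.
elim: t x => [|t IH] x /=.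
  by case/imsetP => k hk ->; exists k; split => //; exists 0%N; split => //; rewrite [inZp 0](_ : _ = 0%R) ?addr0 //; exact: val_inj.
case/setUP => [/IH [k [hk [j [hj ->]]]]|/imsetP [y /IH [k [hk [j [hj ->]]]] ->]].
  by exists k; split => //; exists j; split => //; lia.
exists k; split => //; exists j.+1; split; first lia.
by rewrite (inZpS n j) !addrA.
Qed.

Lemma shift_full n (S : {set 'I_n.+1}) : S != set0 ->
  [set (x + inZp 1)%R | x in S] \subset S -> S = setT.
Proof.
case/set0Pn => s hs hsub.
have hj : forall j, (s + (inZp j : 'I_n.+1))%R \in S.
  elim => [|j IH]; first by rewrite [inZp 0](_ : _ = 0%R) ?addr0 //; exact: val_inj.
  rewrite (inZpS n j) addrA; apply: (subsetP hsub); exact: imset_f.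
apply/setP => v; rewrite inE.
have := hj (val (v - s)%R); rewrite valZpK addrC subrK //.
Qed.

Lemma Dset_card n (K : {set 'I_n.+1}) c t : K != set0 ->
  (minn n.+1 (#|K| + t) <= #|Dset K c t|)%N.
Proof.
move=> hK; elim: t => [|t IH] /=.
  by rewrite card_imset ?addn0 ?geq_minr //; apply: addIr.
set S := Dset K c t.
have hS : S != set0.
  case/set0Pn: hK => k hk; apply/set0Pn.
  have : forall t, exists x, x \in Dset K c t.
    elim => [|u [x hx]] /=; first by exists (k + c)%R; exact: imset_f.
    by exists x; rewrite inE hx.
  by case/(_ t) => x hx; exists x.
case: (boolP ([set (x + inZp 1)%R | x in S] \subset S)) => hsub.
  have hT := @shift_full n S hS hsub.
  have : #|S :|: [set (x + inZp 1)%R | x in S]| = n.+1.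
    by rewrite hT setTU cardsT card_ord.
  move=> ->; exact: geq_minl.
have := proper_card (properUl hsub); move: IH; rewrite -/S.
set a := #|S|; set b := #|_ :|: _|; set k := #|K|; lia.
Qed.

Lemma local_ineq n q (I : {set {set 'I_n.+1}}) (s : {perm 'I_n.+1}) :
  (0 < q)%N -> (2 * q <= n.+1)%N -> kneser_independent q I ->
  ((n.+1 - q) * #|[set i | s @: arc n q i \in I]|
    <= q * #|[set i | s @: arc n q i \in kneser_nbhd q I]|)%N.
Proof.
move=> q0 hq /andP [_ /forallP hind].
set K := [set i | _ \in I]; set M := [set i | _ \in kneser_nbhd q I].
case: (eqVneq K set0) => [->|hK]; first by rewrite cards0 muln0.
set m := (n.+1 - 2 * q)%N.
set Dm := Dset K (inZp q) m.
have sub : Dm \subset M.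
  apply/subsetP => x /Dset_mem [k [hk [j [hj ->]]]].
  rewrite !inE /kneser_vertex card_imset; last exact: perm_inj.
  rewrite card_arc ?eqxx /=; last lia.
  apply/existsP; exists (s @: arc n q k); rewrite inE in hk; rewrite hk /=.
  rewrite /kneser_adj imset_disjoint; last exact: perm_inj.
  have -> : (k + inZp q + inZp j)%R = (k + (inZp (q + j) : 'I_n.+1))%R.
    rewrite -addrA; congr (_ + _)%R; apply: val_inj => /=; by rewrite modnDm.
  apply: arc_disj; lia.
have dis : K :&: M = set0.
  apply/setP => i; rewrite !inE; apply/negP => /andP [hi /andP [_ /existsP [A /andP [hA hadj]]]].
  by have := hind A; rewrite hA /= => /forallP /(_ (s @: arc n q i)); rewrite hi hadj.
have h1 : (#|K| + #|M| <= n.+1)%N.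
  rewrite -cardsUI dis cards0 addn0; have := max_card (K :|: M); by rewrite card_ord.
have h2 := @Dset_card n K (inZp q) m hK.
have h3 := subset_leq_card sub.
rewrite -/Dm in h2.
move: h1 h2 h3; set k := #|K|; set mm := #|M|; set d := #|Dm| => h1 h2 h3.
have k0 : (0 < k)%N by rewrite card_gt0.
have hm : (k + m <= mm)%N by lia.
have hk : (k <= q)%N by lia.
have := leq_mul (leqnn m) hk.
have -> : (n.+1 - q = q + m)%N by lia.
move=> hmk; nia.
Qed.

Lemma card_sum (T : finType) (P : pred T) : #|[set x | P x]| = (\sum_x (P x : nat))%N.
Proof.
by rewrite -sum1dep_card big_mkcond /=; apply: eq_bigr => x _; case: (P x).
Qed.

Lemma W_eq n q (F : {set {set 'I_n.+1}}) : (q <= n.+1)%N ->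
  (forall B, B \in F -> #|B| = q) ->
  (\sum_(s : {perm 'I_n.+1}) #|[set i | s @: arc n q i \in F]|)%N
   = (#|F| * (n.+1 * #|[set s : {perm 'I_n.+1} | s @: A0 n q == A0 n q]|))%N.
Proof.
move=> hq hF.
set g := #|[set s : {perm 'I_n.+1} | _]|.
rewrite (eq_bigr (fun s : {perm 'I_n.+1} => \sum_i (s @: arc n q i \in F : nat))%N); last first.
  by move=> s _; rewrite card_sum.
rewrite exchange_big /=.
rewrite (eq_bigr (fun _ => #|F| * g)%N).
  by rewrite sum_nat_const card_ord mulnCA mulnA [(#|F| * n.+1)%N]mulnC.
move=> i _.
rewrite -card_sum -sum1dep_card.
rewrite (partition_big (fun s : {perm 'I_n.+1} => s @: arc n q i) (mem F)) //=.
rewrite -[#|F|]sum1_card big_distrl /=.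
apply: eq_bigr => B hB; rewrite mul1n.
rewrite (eq_bigl (fun s : {perm 'I_n.+1} => s @: arc n q i == B)); last first.
  by move=> s; case: eqP => [->|_]; rewrite ?hB ?andbF ?andbT.
rewrite sum1dep_card /g; apply: fiber_const.
  by rewrite card_arc ?card_A0.
by rewrite hF ?card_A0.
Qed.

Lemma main_nat n q (I : {set {set 'I_n.+1}}) :
  (0 < q)%N -> (2 * q <= n.+1)%N -> kneser_independent q I ->
  ((n.+1 - q) * #|I| <= q * #|kneser_nbhd q I|)%N.
Proof.
move=> q0 hq hI.
have hqn : (q <= n.+1)%N by lia.
have hIc : forall B, B \in I -> #|B| = q.
  move: hI => /andP [/forallP h _] B hB; have := h B; rewrite hB /=.
  by move/eqP.
have hNc : forall B, B \in kneser_nbhd q I -> #|B| = q.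
  by move=> B; rewrite inE => /andP [/eqP].
have : (\sum_(s : {perm 'I_n.+1}) (n.+1 - q) * #|[set i | s @: arc n q i \in I]|
   <= \sum_(s : {perm 'I_n.+1}) q * #|[set i | s @: arc n q i \in kneser_nbhd q I]|)%N.
  by apply: leq_sum => s _; exact: local_ineq.
rewrite -!big_distrr /= !W_eq //.
set g := #|[set s : {perm 'I_n.+1} | _]|.
have g0 : (0 < g)%N.
  apply/card_gt0P; exists 1%g; rewrite inE.
  apply/eqP; rewrite -[RHS]imset_id; apply: eq_imset => x; by rewrite perm1.
by rewrite !mulnA !leq_pmul2r.
Qed.
Local Open Scope ring_scope.

Theorem mainTheorem7 (p q : nat) (I : {set {set 'I_p}}) :
  (0 < q)%N -> (0 < p)%N -> (2 <= p%:Q / q%:Q) ->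
  kneser_independent q I ->
  ((p%:Q - q%:Q) / q%:Q) * #|I|%:Q <= #|kneser_nbhd q I|%:Q.
Proof.
case: p I => [|n] I q0 // _ h hI.
have qQ : 0 < q%:Q by rewrite ltr0n.
rewrite ler_pdivlMr // -natrM ler_nat in h.
have hq := h.
have := @main_nat n q I q0 hq hI.
rewrite mulrAC ler_pdivrMr // -natrB; last by lia.
by rewrite -!natrM ler_nat [X in (_ <= X)%N]mulnC.
Qed.
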